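(* Let $G=(V,E)$ be a $k$-cozy graph and let $U\subseteq V$ have fewer than $k$ spines in total. Then for every color $c\in\{1,\dots,k\}$, the number of spines of $U$ of color $c$ is even.
   Context: An undirected graph $G$ is $k$-cozy if it is connected, $k$-regular, and equipped with a $1$-factorization, i.e., an assignment of colors from $\{1,\dots,k\}$ to its edges such that the $k$ edges incident at each vertex receive distinct colors. For $U\subseteq V$, a spine of $U$ is an edge with exactly one endpoint in $U$. *)

(* Defs.v *)
From mathcomp Require Import all_boot.
Set Implicit Arguments. Unset Strict Implicit. Unset Printing Implicit Defensive.

Definition simple_graph (V : finType) (E : {set {set V}}) : Prop :=
  forall e, e \in E -> #|e| = 2.

Definition adj (V : finType) (E : {set {set V}}) : rel V :=
  fun x y => (x != y) && ([set x; y] \in E).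

Definition graph_connected (V : finType) (E : {set {set V}}) : Prop :=
  forall x y : V, connect (adj E) x y.

Definition incident (V : finType) (E : {set {set V}}) (x : V) : {set {set V}} :=
  [set e in E | x \in e].

Definition regular (V : finType) (E : {set {set V}}) (k : nat) : Prop :=
  forall x : V, #|incident E x| = k.

(* col : colours in 'I_k (i.e. {0,..,k-1}, standing for {1,..,k});
   the k edges at each vertex receive distinct colours. *)
Definition one_factorization (V : finType) (E : {set {set V}}) (k : nat)
  (col : {set V} -> 'I_k) : Prop :=
  forall x : V, {in incident E x &, injective col}.

Definition cozy (V : finType) (E : {set {set V}}) (k : nat)
  (col : {set V} -> 'I_k) : Prop :=
  [/\ simple_graph E, graph_connected E, regular E k & one_factorization E col].

Definition spines (V : finType) (E : {set {set V}}) (U : {set V}) : {set {set V}} :=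
  [set e in E | #|e :&: U| == 1].

(* Main.v *)
Require Import Defs.
From mathcomp Require Import all_boot.
Set Implicit Arguments. Unset Strict Implicit. Unset Printing Implicit Defensive.

Section S.
Variables (V : finType) (E : {set {set V}}) (k : nat) (col : {set V} -> 'I_k).
Hypothesis Hs : simple_graph E.
Hypothesis Hr : regular E k.
Hypothesis Hf : one_factorization E col.

Lemma exists_col (x : V) (c : 'I_k) : exists2 e, e \in incident E x & col e = c.
Proof.
have Hc : #|col @: incident E x| = k.
  by rewrite card_in_imset ?Hr //; exact: (Hf (x:=x)).
have : col @: incident E x = setT.
  apply/eqP; rewrite eqEcard subsetT /= cardsT card_ord Hc //.
move=> Himg; have : c \in col @: incident E x by rewrite Himg inE.
by case/imsetP=> e He ->; exists e.
Qed.

Lemma unique_col (x : V) (c : 'I_k) :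
  #|[set e in [set e in E | col e == c] | x \in e]| = 1.
Proof.
have [e0 He0 He0c] := exists_col x c.
apply/eqP/cards1P; exists e0; apply/setP=> e; rewrite !inE.
apply/idP/idP.
- case/andP=> /andP[HeE /eqP Hc] Hx; apply/eqP; apply: (Hf (x:=x)) => //.
  + by rewrite inE HeE.
  + by rewrite Hc He0c.
- move/eqP->; move: He0; rewrite inE => /andP[-> ->]; by rewrite He0c eqxx.
Qed.

Lemma parity (U : {set V}) (c : 'I_k) :
  odd #|U| = odd #|[set e in [set e in E | #|e :&: U| == 1] | col e == c]|.
Proof.
set M := [set e in E | col e == c].
have H1 : \sum_(e in M) #|e :&: U| = #|U|.
  transitivity (\sum_(e in M) \sum_(x in U) ((x \in e) : nat)).
    apply: eq_bigr => e _; rewrite -sum1_card.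
    rewrite (big_mkcond (fun x => x \in e :&: U)) [RHS]big_mkcond.
    by apply: eq_bigr => x _; rewrite inE andbC; case: (x \in U); case: (x \in e).
  rewrite exchange_big /= -sum1_card; apply: eq_bigr => x _.
  rewrite -(unique_col x c) -sum1_card.
  rewrite big_mkcond [RHS]big_mkcond; apply: eq_bigr => e _; rewrite !inE.
  by case: (_ && _); case: (x \in e).
have H2 : forall e, e \in M -> #|e :&: U| = (#|e :&: U| == 1) + 2 * (#|e :&: U| == 2).
  move=> e; rewrite inE => /andP[He _].
  have : #|e :&: U| <= 2 by rewrite -(Hs He) subset_leq_card // subsetIl.
  by case: #|e :&: U| => [|[|[|]]].
rewrite -H1 (eq_bigr _ H2) big_split /= -big_distrr /= oddD oddM /= addbF.
rewrite -sum1_card big_mkcond [in RHS]big_mkcond /=.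
congr odd; apply: eq_bigr => e _; rewrite !inE.
by case: (e \in E); case: (col e == c); case: (#|e :&: U| == 1).
Qed.
End S.

Theorem mainTheorem10 (V : finType) (E : {set {set V}}) (k : nat)
  (col : {set V} -> 'I_k) (U : {set V}) :
  cozy E col ->
  #|spines E U| < k ->
  forall c : 'I_k, ~~ odd #|[set e in spines E U | col e == c]|.
Proof.
case=> Hs _ Hr Hf Hlt c.
have [c0 Hc0] : exists c0 : 'I_k, [set e in spines E U | col e == c0] = set0.
  case: (pickP (fun c0 : 'I_k => [set e in spines E U | col e == c0] == set0)) => [c0 /eqP Hc0|Hall]; first by exists c0; exact: Hc0.
  exfalso.
  have : col @: spines E U = setT.
    apply/setP=> d; rewrite inE; case/set0Pn: (negbT (Hall d))=> e; rewrite inE.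
    by case/andP=> He /eqP <-; apply: imset_f.
  move=> Himg; move: (leq_imset_card col (spines E U)).
  by rewrite Himg cardsT card_ord leqNgt Hlt.
rewrite /spines -(parity Hs Hr Hf U c).
by rewrite (parity Hs Hr Hf U c0) -/(spines E U) Hc0 cards0.
Qed.
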